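(* Let $k\ge1$ and $n\ge0$. The map $\psi$ from $\mathcal{A}^k_n$ to the set $\overline{\mathcal{Q}}^k_n$ of $k$-quasi-Stirling permutations of size $n$, defined recursively by letting $\psi$ of a tree consisting of a single leaf be the empty sequence, and, for a tree whose root is an internal vertex with label $b$ and whose root subtrees from left to right are $S_1,\dots,S_k$, $$\psi(T)=\psi(S_1)\,b\,\psi(S_2)\,b\cdots\psi(S_k)\,b$$ (i.e. a left-to-right depth-first walk recording the label of a vertex each time the walk returns to it from a child), is well defined (its values lie in $\overline{\mathcal{Q}}^k_n$) and is a bijection $\mathcal{A}^k_n\to\overline{\mathcal{Q}}^k_n$.
   Context: A $k$-ary tree is a plane (ordered) rooted tree in which every vertex has either $0$ or $k$ children; vertices with $k$ children are internal. $\mathcal{A}^k_n$ is the set of $k$-ary trees with $n$ internal vertices whose internal vertices are labeled bijectively by $\{1,\dots,n\}$ (leaves are unlabeled). A $k$-quasi-Stirling permutation of size $n$ is a permutation $\pi$ of the multiset $\{1^k,2^k,\dots,n^k\}$ (each of $1,\dots,n$ appearing $k$ times) that avoids $1212$ and $2121$, i.e. there are no indices $i<j<k'<\ell$ with $\pi_i=\pi_{k'}\neq\pi_j=\pi_\ell$. *)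

(* Defs.v *)
From mathcomp Require Import all_boot.
Set Implicit Arguments. Unset Strict Implicit. Unset Printing Implicit Defensive.

Inductive ktree : Type :=
| Leaf : ktree
| Node : nat -> seq ktree -> ktree.

Fixpoint is_kary (k : nat) (t : ktree) : bool :=
  match t with
  | Leaf => true
  | Node _ ts => (size ts == k) && all (is_kary k) ts
  end.

Fixpoint labels (t : ktree) : seq nat :=
  match t with
  | Leaf => [::]
  | Node b ts => b :: flatten (map labels ts)
  end.

Definition in_A (k n : nat) (t : ktree) : Prop :=
  is_kary k t /\ perm_eq (labels t) (iota 1 n).

Fixpoint psi (t : ktree) : seq nat :=
  match t with
  | Leaf => [::]
  | Node b ts => flatten (map (fun s => rcons (psi s) b) ts)
  end.

Definition avoids_1212_2121 (s : seq nat) : Prop :=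
  forall i j k' l, i < j -> j < k' -> k' < l -> l < size s ->
    ~ (nth 0 s i = nth 0 s k' /\ nth 0 s j = nth 0 s l /\
       nth 0 s i <> nth 0 s j).

Definition quasi_stirling (k n : nat) (s : seq nat) : Prop :=
  perm_eq s (flatten [seq nseq k i | i <- iota 1 n]) /\ avoids_1212_2121 s.

(* Main.v *)
Require Import Defs.
From mathcomp Require Import all_boot.
From mathcomp Require Import zify.
Set Implicit Arguments. Unset Strict Implicit. Unset Printing Implicit Defensive.

Definition AV (s : seq nat) : Prop :=
  forall x y, x != y -> ~~ subseq [:: x; y; x; y] s.

Lemma subseq_dec (x : nat) p s : subseq (x :: p) s ->
  exists a1 a2, s = a1 ++ x :: a2 /\ subseq p a2.
Proof.
elim: s => [//|z s IH] /=.
case: eqVneq => [<-|ne] H.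
  by exists [::], s.
have [a1 [a2 [-> H2]]] := IH H.
by exists (z :: a1), a2.
Qed.

Lemma nth_at (a r : seq nat) x : nth 0 (a ++ x :: r) (size a) = x.
Proof. by rewrite nth_cat ltnn subnn. Qed.

Lemma nth_after (a r : seq nat) x m : nth 0 (a ++ x :: r) (size a + m.+1) = nth 0 r m.
Proof. by rewrite nth_cat ltnNge leq_addr /= addKn. Qed.

Lemma avoids_AV s : avoids_1212_2121 s -> AV s.
Proof.
move=> Hav x y xy; apply/negP => H.
have [a1 [s1 [E1 H1]]] := subseq_dec H.
have [a2 [s2 [E2 H2]]] := subseq_dec H1.
have [a3 [s3 [E3 H3]]] := subseq_dec H2.
have [a4 [s4 [E4 _]]] := subseq_dec H3.
apply: (Hav (size a1) (size a1 + (size a2).+1)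
   (size a1 + (size a2 + (size a3).+1).+1)
   (size a1 + (size a2 + (size a3 + (size a4).+1).+1).+1)).
- lia.
- lia.
- lia.
- rewrite E1 E2 E3 E4; do 4! rewrite size_cat /=; lia.
- rewrite E1 nth_at !nth_after E2 nth_at !nth_after E3 nth_at !nth_after E4 nth_at.
  by split; [|split]; [| |apply/eqP].
Qed.

Lemma step (s : seq nat) i m p : m <= i -> i < @size nat s -> subseq p (drop i.+1 s) ->
  subseq (nth 0 s i :: p) (drop m s).
Proof.
move=> mi iS H.
apply: (@subseq_trans _ (drop i s)).
  by rewrite (drop_nth 0 iS) /= eqxx.
have -> : drop i s = drop (i - m) (drop m s) by rewrite drop_drop subnK.
exact: drop_subseq.
Qed.

Lemma AV_avoids s : AV s -> avoids_1212_2121 s.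
Proof.
move=> H i j k l ij jk kl ls [E1 [E2 E3]].
have /negP := H _ _ (introN eqP E3); apply.
rewrite -[X in subseq _ X]drop0.
apply: step; [done|lia|].
rewrite E1 {2}E2.
apply: step; [lia|lia|].
apply: step; [lia|lia|].
apply: step; [lia|lia|].
exact: sub0seq.
Qed.

Lemma split_b (b : nat) s : last b s = b ->
  exists ws, s = flatten (map (fun w => rcons w b) ws) /\ all (fun w => b \notin w) ws.
Proof.
elim: s => [|x s IH] /=; first by exists [::].
case: (eqVneq x b) => [->|xb] H.
  have [ws [-> Hw]] := IH H. by exists ([::] :: ws).
case: s IH H => [|y s] IH /= H; first by rewrite H eqxx in xb.
have [[|w ws] [E Hw]] := IH H; first by [].
exists ((x :: w) :: ws); split; first by rewrite E.
move: Hw => /= /andP [H1 H2]. by rewrite /= H2 andbT inE negb_or eq_sym xb H1.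
Qed.

Lemma subseq_rcons2 (p s : seq nat) a c : subseq (rcons p a) (rcons s c) -> subseq p s.
Proof.
rewrite -subseq_rev !rev_rcons /=.
case: eqVneq => _ H; rewrite -subseq_rev //.
apply: subseq_trans H; exact: subseq_cons.
Qed.

Lemma subseq_rcons_neq (p s : seq nat) a c : a != c ->
  subseq (rcons p a) (rcons s c) -> subseq (rcons p a) s.
Proof.
move=> ac; rewrite -subseq_rev !rev_rcons /= (negbTE ac) => H.
by rewrite -subseq_rev rev_rcons.
Qed.

Lemma subseq_cat_dec (p s1 s2 : seq nat) : subseq p (s1 ++ s2) ->
  exists p1 p2, p = p1 ++ p2 /\ subseq p1 s1 /\ subseq p2 s2.
Proof.
elim: s1 p => [|x s1 IH] p /=.
  by move=> H; exists [::], p; split => //; split => //; exact: sub0seq.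
case: p => [|y p] H.
  by exists [::], [::]; split => //; split => //; exact: sub0seq.
move: H; case: (eqVneq y x) => [<-|ne] H.
  have [p1 [p2 [-> [H1 H2]]]] := IH _ H.
  by exists (y :: p1), p2; split => //; split => //=; rewrite eqxx.
have [p1 [p2 [E [H1 H2]]]] := IH _ H.
exists p1, p2; split => //; split => //; exact: (@subseq_trans _ s1 _ _ H1 (subseq_cons _ _)).
Qed.

Lemma in2 (a b : nat) s : b \in a :: b :: s.
Proof. by rewrite !inE eqxx orbT. Qed.
Lemma in_tl (T : eqType) (a x : T) (s : seq T) : x \in s -> x \in a :: s.
Proof. by rewrite inE => ->; rewrite orbT. Qed.

Definition fr (b : nat) (ws : seq (seq nat)) := flatten (map (fun w => rcons w b) ws).

Lemma mem_fr c b ws : c \in fr b ws -> c = b \/ exists2 w, w \in ws & c \in w.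
Proof.
elim: ws => [|w ws IH] //=.
rewrite /fr /= mem_cat mem_rcons inE => /orP [/orP [/eqP ->|H]|H].
- by left.
- by right; exists w => //; rewrite inE eqxx.
- case: (IH H) => [->|[w' ? ?]]; first by left.
  by right; exists w' => //; rewrite inE orbC; apply/orP; left.
Qed.

Definition D (u v : seq nat) := all (fun c => c \notin v) u.

Lemma notin_rest c b w ws : c \in w -> b \notin w -> all (D w) ws -> c \notin fr b ws.
Proof.
move=> cw bw Hall; apply/negP => /mem_fr [E|[w' w'in cw']].
  by subst; rewrite cw in bw.
move/allP: Hall => /(_ _ w'in) /allP /(_ _ cw).
by rewrite cw'.
Qed.

Lemma both_b c b w ws : b \notin w -> all (D w) ws -> c \in rcons w b -> c \in fr b ws -> c = b.
Proof.
move=> bw Dw; rewrite mem_rcons inE => /orP [/eqP //|cw] cr.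
by have := notin_rest cw bw Dw; rewrite cr.
Qed.

Lemma Lyby y b ws : y != b -> all (fun w => b \notin w) ws -> pairwise D ws ->
  ~~ subseq [:: y; b; y] (fr b ws).
Proof.
move=> yb; elim: ws => [|w ws IH] //= /andP [bw Hb] /andP [Dw Hp].
apply/negP; rewrite /fr /= -/(fr b ws) => /subseq_cat_dec [p1 [p2 [E [H1 H2]]]].
case: p1 E H1 => [|a1 [|a2 [|a3 [|a4 p1]]]] /= E H1.
- by rewrite -E (negbTE (IH Hb Hp)) in H2.
- move: H1; case: E => <- E2 H1; subst p2.
  have := both_b bw Dw (mem_subseq H1 (mem_head _ _)) (mem_subseq H2 (in2 _ _ _)).
  by move/eqP; rewrite (negbTE yb).
- move: H1; case: E => <- <- E2 H1; subst p2.
  have := both_b bw Dw (mem_subseq H1 (mem_head _ _)) (mem_subseq H2 (mem_head _ _)).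
  by move/eqP; rewrite (negbTE yb).
- move: H1; case: E => <- <- <- E2 H1.
  have := subseq_rcons_neq (p := [:: y; b]) yb H1 => /mem_subseq /(_ b).
  by rewrite !inE eqxx orbT => /(_ isT); rewrite (negbTE bw).
- by case: E.
Qed.

Lemma AV_node b ws : all (fun w => b \notin w) ws -> pairwise D ws ->
  (forall w, w \in ws -> AV w) -> AV (fr b ws).
Proof.
elim: ws => [|w ws IH] /=; first by move=> _ _ _ x y _.
move=> /andP [bw Hb] /andP [Dw Hp] HAV x y xy.
have AVw := HAV w (mem_head _ _).
have IH' := IH Hb Hp (fun w' h => HAV w' (in_tl _ h)).
apply/negP; rewrite /fr /= -/(fr b ws) => /subseq_cat_dec [p1 [p2 [E [H1 H2]]]].
case: p1 E H1 => [|a1 [|a2 [|a3 [|a4 [|a5 p1]]]]] /= E H1.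
- by rewrite -E (negbTE (IH' x y xy)) in H2.
- move: H1; case: E => <- E2 H1; subst p2.
  have xr : x \in fr b ws := mem_subseq H2 (in2 _ _ _).
  have := mem_subseq H1 (mem_head _ _).
  rewrite mem_rcons inE => /orP [/eqP xb|xw].
    subst x. have yb : y != b by rewrite eq_sym.
    by rewrite (negbTE (Lyby yb Hb Hp)) in H2.
  by rewrite (negbTE (notin_rest xw bw Dw)) in xr.
- move: H1; case: E => <- <- E2 H1; subst p2.
  have xb := both_b bw Dw (mem_subseq H1 (mem_head _ _)) (mem_subseq H2 (mem_head _ _)).
  have yb := both_b bw Dw (mem_subseq H1 (in2 _ _ _))
     (mem_subseq H2 (in2 _ _ _)).
  by rewrite xb yb eqxx in xy.
- move: H1; case: E => <- <- <- E2 H1; subst p2.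
  have yb := both_b bw Dw (mem_subseq H1 (in2 _ _ _)) (mem_subseq H2 (mem_head _ _)).
  subst y.
  have := subseq_rcons_neq (p := [:: x; b]) xy H1 => /mem_subseq /(_ b).
  by rewrite !inE eqxx orbT => /(_ isT); rewrite (negbTE bw).
- move: H1; case: E => <- <- <- <- E2 H1.
  case: (eqVneq y b) => [yb|yb].
    subst y. have := subseq_rcons2 (p := [:: x; b; x]) H1 => /mem_subseq /(_ b).
    by rewrite !inE eqxx orbT => /(_ isT); rewrite (negbTE bw).
  have := subseq_rcons_neq (p := [:: x; y; x]) yb H1.
  by rewrite (negbTE (AVw x y xy)).
- by case: E.
Qed.

Lemma cb_sub (c b : nat) w : c \in w -> subseq [:: c; b] (rcons w b).
Proof.
elim: w => [|x w IH] //=.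
case: (eqVneq c x) => [<-|ne] H.
  by rewrite sub1seq mem_rcons mem_head.
apply: IH. by move: H; rewrite inE (negbTE ne).
Qed.

Lemma cb_sub_fl (c b : nat) (w : seq nat) (ws : seq (seq nat)) : w \in ws -> c \in w -> subseq [:: c; b] (fr b ws).
Proof.
elim: ws => [|w0 ws IH] //=.
rewrite inE => /orP [/eqP <- | H] cw; rewrite /fr /= -/(fr b ws).
  rewrite -[[:: c; b]]cats0; apply: cat_subseq (cb_sub _ cw) (sub0seq _).
rewrite -[[:: c; b]]cat0s; exact: cat_subseq (sub0seq _) (IH H cw).
Qed.

Lemma AV_disj (b : nat) (ws : seq (seq nat)) : all (fun w => b \notin w) ws -> AV (fr b ws) -> pairwise D ws.
Proof.
elim: ws => [|w ws IH] //= /andP [bw Hb] H.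
rewrite /fr /= -/(fr b ws) in H.
apply/andP; split; last first.
  suff Hs : AV (fr b ws) by exact: (IH Hb Hs).
  move=> x y xy; apply/negP => Hs.
  by have := H x y xy; rewrite (@subseq_trans _ _ _ _ Hs (suffix_subseq _ _)).
apply/allP => w' w'in; apply/allP => c cw; apply/negP => cw'.
have cb : c != b by apply/eqP => E; subst; rewrite cw in bw.
have := H c b cb.
by rewrite (cat_subseq (s1 := [:: c; b]) (s2 := [:: c; b]) (@cb_sub c b w cw) (@cb_sub_fl c b w' ws w'in cw')).
Qed.

Lemma piece_sub (w : seq nat) (ws : seq (seq nat)) (b : nat) : w \in ws -> subseq (rcons w b) (fr b ws).
Proof.
elim: ws => [|w0 ws IH] //=.
rewrite inE => /orP [/eqP <- | H]; rewrite /fr /= -/(fr b ws).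
  exact: prefix_subseq.
rewrite -[rcons w b]cat0s; exact: cat_subseq (sub0seq _) (IH H).
Qed.

Lemma count_fr c b ws : count_mem c (fr b ws) = sumn (map (count_mem c) ws) + (b == c) * size ws.
Proof.
elim: ws => [|w ws IH]; first by rewrite /= muln0.
rewrite /fr /= -/(fr b ws) count_cat IH -cats1 count_cat /=.
case: (b == c) => /=; lia.
Qed.

Lemma sumn_zero (c : nat) (ws : seq (seq nat)) : (forall w, w \in ws -> c \notin w) -> sumn (map (count_mem c) ws) = 0.
Proof.
elim: ws => [|w ws IH] //= H.
rewrite IH; last by move=> w' h; apply: H; rewrite inE h orbT.
by rewrite addn0; apply/count_memPn; apply: H; rewrite mem_head.
Qed.

Lemma sumn_disj (c : nat) (w : seq nat) (ws : seq (seq nat)) : w \in ws -> c \in w -> pairwise D ws ->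
  sumn (map (count_mem c) ws) = count_mem c w.
Proof.
elim: ws => [|w0 ws IH] //=.
rewrite inE => /orP [/eqP <- | H] cw /andP [Dw Hp].
  rewrite sumn_zero ?addn0 // => w' w'in.
  by move/allP: Dw => /(_ _ w'in) /allP /(_ _ cw).
rewrite IH // (_ : count_mem c w0 = 0) //.
apply/count_memPn/negP => cw0.
by move/allP: Dw => /(_ _ H) /allP /(_ _ cw0); rewrite cw.
Qed.

Lemma count_FL (k c : nat) (L : seq nat) : count_mem c (flatten [seq nseq k i | i <- L]) = k * count_mem c L.
Proof.
elim: L => [|i L IH] /=; first by rewrite muln0.
rewrite count_cat count_nseq IH /=.
case: (i == c) => /=; lia.
Qed.

Fixpoint ktree_ind2 (P : ktree -> Prop) (HL : P Leaf)
  (HN : forall b ts, (forall t, List.In t ts -> P t) -> P (Node b ts)) (t : ktree) : P t :=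
  match t with
  | Leaf => HL
  | Node b ts => HN b ts ((fix F (l : seq ktree) : forall t, List.In t l -> P t :=
       match l with
       | [::] => fun t (H : List.In t [::]) => False_ind _ H
       | t0 :: l' => fun t H => match H with
                    | or_introl E => eq_ind t0 P (@ktree_ind2 P HL HN t0) t E
                    | or_intror H' => F l' t H'
                    end
       end) ts)
  end.

Lemma in_all (T : Type) (p : pred T) s x : all p s -> List.In x s -> p x.
Proof. elim: s => [|y s IH] //= /andP [py ps] [<-|H] //; exact: IH. Qed.

Lemma In_all (T : Type) (p : pred T) s : (forall x, List.In x s -> p x) -> all p s.
Proof.
elim: s => [|y s IH] //= H; rewrite H /=; last by left.
by apply: IH => x h; apply: H; right.
Qed.

Lemma In_flatten (f : ktree -> seq nat) ts t c : List.In t ts -> c \in f t -> c \in flatten (map f ts).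
Proof.
elim: ts => [|t0 ts IH] //= [<-|H] cf; rewrite mem_cat ?cf //.
by rewrite IH ?orbT.
Qed.

Lemma mem_map_In (T : Type) (f : T -> seq nat) ts w : w \in map f ts -> exists t, List.In t ts /\ w = f t.
Proof.
elim: ts => [|t0 ts IH] //=; rewrite inE => /orP [/eqP ->|H].
  by exists t0; split => //; left.
by have [t [Ht ->]] := IH H; exists t; split => //; right.
Qed.

Lemma uniq_In (g : ktree -> seq nat) ts t : List.In t ts -> uniq (flatten (map g ts)) -> uniq (g t).
Proof.
elim: ts => [|t0 ts IH] //= [<-|H]; rewrite cat_uniq => /and3P [u1 _ u2] //.
exact: IH.
Qed.

Lemma uniq_pw (f g : ktree -> seq nat) ts : (forall t, List.In t ts -> f t =i g t) ->
  uniq (flatten (map g ts)) -> pairwise D (map f ts).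
Proof.
elim: ts => [|t0 ts IH] //= Heq; rewrite cat_uniq => /and3P [_ nh u2].
apply/andP; split; last first.
  by apply: IH u2 => t h; apply: Heq; right.
rewrite all_map; apply: In_all => t' Ht' /=.
apply/allP => c cf; apply/negP => cf'.
rewrite Heq in cf; last by left.
rewrite Heq in cf'; last by right.
move/hasP: nh; apply; exists c => //.
exact: In_flatten Ht' cf'.
Qed.

Lemma sumn_eqk (f g : ktree -> nat) k ts : (forall t, List.In t ts -> f t = k * g t) ->
  sumn (map f ts) = k * sumn (map g ts).
Proof.
elim: ts => [|t ts IH] /= H; first by rewrite muln0.
rewrite H; last by left.
rewrite IH; last by move=> t' h; apply: H; right.
by rewrite mulnDr.
Qed.

Lemma psi_node b ts : psi (Node b ts) = fr b (map psi ts).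
Proof. by rewrite /= /fr -map_comp. Qed.

Lemma labels_node b ts : labels (Node b ts) = b :: flatten (map labels ts).
Proof. by []. Qed.

Lemma count_psi k t : is_kary k t -> forall c, count_mem c (psi t) = k * count_mem c (labels t).
Proof.
elim/ktree_ind2: t => [|b ts IH]; first by move=> _ c; rewrite /= muln0.
case/andP => /eqP Hs Hall c.
rewrite psi_node labels_node count_fr size_map Hs /= !count_flatten.
have -> : sumn (map (count_mem c) (map psi ts)) = k * sumn (map (count_mem c) (map labels ts)).
  rewrite -!map_comp; apply: sumn_eqk => t Ht /=.
  exact: (IH t Ht (in_all Hall Ht) c).
by rewrite mulnDr addnC [(_ == _) * _]mulnC.
Qed.

Lemma mem_cnt (c : nat) s : (c \in s) = (0 < count_mem c s).
Proof. by rewrite -has_pred1 has_count. Qed.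

Lemma mem_psi k t : 0 < k -> is_kary k t -> psi t =i labels t.
Proof. by move=> kp Hk c; rewrite !mem_cnt (count_psi Hk) muln_gt0 kp. Qed.

Lemma AV_psi k t : 0 < k -> is_kary k t -> uniq (labels t) -> AV (psi t).
Proof.
move=> kp; elim/ktree_ind2: t => [|b ts IH]; first by move=> _ _ x y.
case/andP => /eqP Hs Hall; rewrite labels_node cons_uniq => /andP [bn u].
rewrite psi_node; apply: AV_node.
- rewrite all_map; apply: In_all => t Ht /=.
  rewrite (mem_psi kp (in_all Hall Ht)); apply/negP => bt.
  by rewrite (In_flatten Ht bt) in bn.
- apply: uniq_pw u => t Ht; exact: mem_psi kp (in_all Hall Ht).
- move=> w /mem_map_In [t [Ht ->]].
  exact: IH Ht (in_all Hall Ht) (uniq_In Ht u).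
Qed.

Lemma count_perm (s1 s2 : seq nat) : (forall c, count_mem c s1 = count_mem c s2) -> perm_eq s1 s2.
Proof. by move=> H; apply/allP => c _; apply/eqP. Qed.

Lemma perm_count (s1 s2 : seq nat) c : perm_eq s1 s2 -> count_mem c s1 = count_mem c s2.
Proof. by move/permP. Qed.

Lemma last_fr (b : nat) (ws : seq (seq nat)) x : ws != [::] -> last x (fr b ws) = b.
Proof.
elim: ws x => [|w ws IH] x //= _.
rewrite /fr /= -/(fr b ws) last_cat last_rcons.
case: ws IH => [|w' ws'] IH //.
exact: IH.
Qed.

Lemma fr_nil (b : nat) ws : fr b ws = [::] -> ws = [::].
Proof. by case: ws => [|w ws] //; rewrite /fr /= cat_rcons; case: w. Qed.

Lemma cat_b_inj (w w' F F' : seq nat) b : b \notin w -> b \notin w' ->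
  w ++ b :: F = w' ++ b :: F' -> w = w' /\ F = F'.
Proof.
elim: w w' => [|x w IH] [|x' w'] /=.
- by move=> _ _ [->].
- move=> _; rewrite inE negb_or => /andP [H _] [E _]; by rewrite E eqxx in H.
- rewrite inE negb_or => /andP [H _] _ [E _]; by rewrite E eqxx in H.
- rewrite !inE !negb_or => /andP [_ H] /andP [_ H'] [-> E].
  by have [-> ->] := IH _ H H' E.
Qed.

Lemma fr_inj (b : nat) (ws ws' : seq (seq nat)) : all (fun w => b \notin w) ws ->
  all (fun w => b \notin w) ws' -> fr b ws = fr b ws' -> ws = ws'.
Proof.
elim: ws ws' => [|w ws IH] [|w' ws'] //=.
- by move=> _ _ /esym /fr_nil.
- by move=> _ _ /fr_nil.
- move=> /andP [bw Hb] /andP [bw' Hb'].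
  rewrite /fr /= -/(fr b ws) -/(fr b ws') !cat_rcons => E.
  have [-> E2] := cat_b_inj bw bw' E.
  by rewrite (IH _ Hb Hb' E2).
Qed.

Lemma map_inj_In (f : ktree -> seq nat) ts ts' :
  (forall t, List.In t ts -> forall t', List.In t' ts' -> f t = f t' -> t = t') ->
  map f ts = map f ts' -> ts = ts'.
Proof.
elim: ts ts' => [|t ts IH] [|t' ts'] //= H [E1 E2].
rewrite (H t _ t' _ E1); [|by left|by left].
congr (_ :: _); apply: IH E2 => u Hu u' Hu'; apply: H; by right.
Qed.

Lemma psi_inj k t1 : 0 < k -> is_kary k t1 -> uniq (labels t1) ->
  forall t2, is_kary k t2 -> uniq (labels t2) -> psi t1 = psi t2 -> t1 = t2.
Proof.
move=> kp; elim/ktree_ind2: t1 => [|b ts IH].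
  move=> _ _ [|b' ts'] // /andP [/eqP Hs _] _.
  rewrite psi_node => /esym /fr_nil /(congr1 size); rewrite size_map Hs /=.
  by move=> E; rewrite E in kp.
case/andP => /eqP Hs Hall; rewrite labels_node cons_uniq => /andP [bn u].
case => [|b' ts'].
  move=> _ _; rewrite psi_node => /fr_nil /(congr1 size); rewrite size_map Hs /=.
  by move=> E; rewrite E in kp.
case/andP => /eqP Hs' Hall'; rewrite labels_node cons_uniq => /andP [bn' u'].
rewrite !psi_node => E.
have nz : forall (l : seq ktree), size l = k -> map psi l != [::].
  by move=> l Hl; rewrite -size_eq0 size_map Hl -lt0n.
have bb : b = b'.
  by rewrite -(last_fr b 0 (nz _ Hs)) E (last_fr _ _ (nz _ Hs')).
subst b'.
have notin : forall (l : seq ktree), all (is_kary k) l -> b \notin flatten (map labels l) ->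
    all (fun w => b \notin w) (map psi l).
  move=> l Hl bl; rewrite all_map; apply: In_all => t Ht /=.
  rewrite (mem_psi kp (in_all Hl Ht)); apply/negP => bt.
  by rewrite (In_flatten Ht bt) in bl.
have := fr_inj (notin _ Hall bn) (notin _ Hall' bn') E.
move/map_inj_In => -> //.
move=> t Ht t' Ht'; apply: IH Ht (in_all Hall Ht) (uniq_In Ht u) t' (in_all Hall' Ht') (uniq_In Ht' u').
Qed.

Definition FL k (L : seq nat) := flatten [seq nseq k i | i <- L].

Lemma collect (P : ktree -> Prop) (ws : seq (seq nat)) :
  (forall w, w \in ws -> exists t, P t /\ psi t = w) ->
  exists ts, map psi ts = ws /\ forall t, List.In t ts -> P t.
Proof.
elim: ws => [|w ws IH] H; first by exists [::].
have [t [Pt Et]] := H w (mem_head _ _).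
have [ts [E Hts]] := IH (fun w' h => H w' (in_tl _ h)).
exists (t :: ts); split; first by rewrite /= Et E.
by move=> t' [<-|h] //; apply: Hts.
Qed.

Lemma cnt_uniq1 (c : nat) L : uniq L -> 0 < count_mem c L -> count_mem c L = 1.
Proof. by move=> u; rewrite (count_uniq_mem _ u); case: (c \in L). Qed.

Lemma surj k : 0 < k -> forall m s L, size s <= m -> uniq L -> perm_eq s (FL k L) -> AV s ->
  exists t, is_kary k t /\ perm_eq (labels t) L /\ psi t = s.
Proof.
move=> kp; elim=> [|m IH] s L.
- case: s => // _ uL Hp _.
  case: L uL Hp => [|c L] uL Hp; first by exists Leaf.
  have := perm_count c Hp; rewrite /FL count_FL /= eqxx.
  move=> E; have : 0 < k * (1 + count_mem c L) by rewrite muln_gt0 kp.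
  by rewrite -E.
case/lastP: s => [|s0 b].
  move=> _ uL Hp _.
  case: L uL Hp => [|c L] uL Hp; first by exists Leaf.
  have := perm_count c Hp; rewrite /FL count_FL /= eqxx.
  move=> E; have : 0 < k * (1 + count_mem c L) by rewrite muln_gt0 kp.
  by rewrite -E.
set s := rcons s0 b => Hsz uL Hp HAV.
have [ws [Es Hb]] := split_b (s := s) (last_rcons b s0 b).
have HAV2 : AV (fr b ws) by rewrite /fr -Es.
have Es2 : s = fr b ws by [].
clear Es; rename Es2 into Es.
have Hpw := AV_disj Hb HAV2.
have cntL : forall c, count_mem c s = k * count_mem c L.
  by move=> c; rewrite (perm_count c Hp) /FL count_FL.
have cnt_s : forall c, 0 < count_mem c s -> count_mem c s = k.
  move=> c; rewrite cntL muln_gt0 kp /= => H.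
  by rewrite (cnt_uniq1 uL H) muln1.
have Hsize : size ws = k.
  have := count_fr b b ws; rewrite -Es eqxx mul1n sumn_zero; last first.
    by move=> w wi; move/allP: Hb; apply.
  rewrite add0n => E.
  rewrite -E; apply: cnt_s; rewrite /s -cats1 count_cat /= eqxx /=; lia.
have permw : forall w, w \in ws -> perm_eq w (FL k (undup w)).
  move=> w wi; apply: count_perm => c.
  rewrite /FL count_FL (count_uniq_mem _ (undup_uniq w)) mem_undup.
  case: (boolP (c \in w)) => cw; last by rewrite muln0; apply/count_memPn.
  have bw : b != c.
    by apply/eqP => E; subst c; move/allP: Hb => /(_ _ wi); rewrite cw.
  rewrite muln1 -(sumn_disj wi cw Hpw).
  have := count_fr c b ws; rewrite -Es (negbTE bw) mul0n addn0 => <-.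
  by apply: cnt_s; rewrite Es count_fr (negbTE bw) mul0n addn0 (sumn_disj wi cw Hpw) -mem_cnt.
have rec : forall w, w \in ws -> exists t, (is_kary k t /\ perm_eq (labels t) (undup (psi t))
    /\ perm_eq (psi t) (FL k (undup (psi t)))) /\ psi t = w.
  move=> w wi.
  have sub : subseq w s.
    rewrite Es; exact: (@subseq_trans _ (rcons w b) _ _ (subseq_rcons w b) (piece_sub b wi)).
  have szw : size w <= m.
    have := size_subseq (piece_sub b wi); rewrite -Es size_rcons => h; lia.
  have AVw : AV w.
    move=> x y xy; apply/negP => H; have := HAV x y xy.
    by rewrite (@subseq_trans _ w _ _ H sub).
  have [t [Hk [Hl Hps]]] := IH w (undup w) szw (undup_uniq w) (permw w wi) AVw.
  by exists t; rewrite Hps; split => //; split => //; split => //; exact: permw.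
have [ts [Ets Hts]] := collect (P := fun t => is_kary k t /\ perm_eq (labels t) (undup (psi t))
    /\ perm_eq (psi t) (FL k (undup (psi t)))) rec.
exists (Node b ts); split; [|split].
- rewrite /= -(size_map psi) Ets Hsize eqxx /=; apply: In_all => t Ht; by case: (Hts t Ht).
- apply: count_perm => c; apply/eqP; rewrite -(eqn_pmul2l kp) -cntL; apply/eqP.
  rewrite labels_node /= count_flatten Es count_fr Hsize -Ets.
  have -> : sumn (map (count_mem c) (map psi ts)) = k * sumn (map (count_mem c) (map labels ts)).
    rewrite -!map_comp; apply: sumn_eqk => t Ht /=.
    case: (Hts t Ht) => _ [Hl Hps].
    by rewrite (perm_count c Hl) (perm_count c Hps) /FL count_FL.
  by rewrite mulnDr addnC [(_ == _) * _]mulnC.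
- by rewrite psi_node Ets Es.
Qed.

Theorem theorem4p1 (k n : nat) : 1 <= k ->
  (forall t, in_A k n t -> quasi_stirling k n (psi t)) /\
  (forall t1 t2, in_A k n t1 -> in_A k n t2 -> psi t1 = psi t2 -> t1 = t2) /\
  (forall s, quasi_stirling k n s -> exists t, in_A k n t /\ psi t = s).
Proof.
move=> kp; split; [|split].
- move=> t [Hk Hl].
  have u : uniq (labels t) by rewrite (perm_uniq Hl) iota_uniq.
  split.
  + apply: count_perm => c.
    by rewrite (count_psi Hk) (perm_count c Hl) count_FL.
  + apply: AV_avoids; exact: AV_psi kp Hk u.
- move=> t1 t2 [H1 L1] [H2 L2].
  apply: (psi_inj kp H1 _ H2); first by rewrite (perm_uniq L1) iota_uniq.
  by rewrite (perm_uniq L2) iota_uniq.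
- move=> s [Hp Hav].
  have [t [Hk [Hl Hps]]] := @surj k kp (size s) s (iota 1 n) (leqnn _) (iota_uniq 1 n) Hp (avoids_AV Hav).
  by exists t.
Qed.
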